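(* Let $\mathcal{K}$ be a pointed closed convex cone in a finite-dimensional Euclidean space. Then for any face $\mathcal{F}$ of $\mathcal{K}$ with $\dim\mathcal{F}>1$ there exists $\beta>0$ such that for every $x\in\operatorname{span}\mathcal{F}$ and every $$y\in\operatorname*{Argmax}_{u\in\mathcal{F},\ \|u\|=1}\langle x,u\rangle$$ we have $$\operatorname{dist}(x+ty,\mathcal{K})\le\operatorname{dist}(x,\mathcal{K})\quad\text{and}\quad\operatorname{dist}(x,\mathcal{F})\le\beta\operatorname{dist}(x+ty,\mathcal{F})\quad\text{for all }t\ge0.$$
   Context: Pointed means $\mathcal{K}\cap(-\mathcal{K})=\{0\}$. A face of $\mathcal{K}$ is a closed convex subset $\mathcal{F}\subseteq\mathcal{K}$ such that whenever $x,y\in\mathcal{K}$ and $\alpha x+(1-\alpha)y\in\mathcal{F}$ for some $\alpha\in(0,1)$, then $x,y\in\mathcal{F}$. *)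

(* Defs.v *)
(* Ambient space: R^n realized as row vectors 'rV[R]_n, with the standard
   Euclidean inner product and norm (defined below; the library's default
   norm on matrices is the sup norm, so we define the Euclidean one). *)
From HB Require Import structures.
From mathcomp Require Import all_boot all_order all_algebra.
From mathcomp Require Import all_classical all_reals all_analysis.
Set Implicit Arguments. Unset Strict Implicit. Unset Printing Implicit Defensive.
Import Order.TTheory GRing.Theory Num.Theory.
Import numFieldNormedType.Exports.
Local Open Scope classical_set_scope.
Local Open Scope ring_scope.

Section Defs.
Context {R : realType} {n : nat}.
Notation V := 'rV[R]_n.

Definition dotp (u v : V) : R := \sum_(i < n) u ord0 i * v ord0 i.
Definition enorm (u : V) : R := Num.sqrt (dotp u u).

Definition dist (x : V) (A : set V) : R := inf [set enorm (x - a) | a in A].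

Definition convex_set (A : set V) : Prop :=
  forall x y (a : R), A x -> A y -> 0 <= a -> a <= 1 -> A (a *: x + (1 - a) *: y).

Definition is_cone (A : set V) : Prop :=
  forall x (t : R), A x -> 0 <= t -> A (t *: x).

Definition pointed (K : set V) : Prop :=
  [set x | K x /\ K (- x)] = [set 0].

Definition is_face (K F : set V) : Prop :=
  [/\ closed F, convex_set F, F `<=` K &
   forall x y (a : R), K x -> K y -> 0 < a -> a < 1 ->
     F (a *: x + (1 - a) *: y) -> F x /\ F y].

Definition linspan F : set V :=
  [set x | exists s : seq V, (forall v, v \in s -> F v) /\ x \in (span s)%VS].

(* dim F = d : the linear span of F has dimension d, i.e. d is the maximal
   dimension of the span of a finite family of elements of F. *)
Definition has_dim F (d : nat) : Prop :=
  (exists s : seq V, (forall v, v \in s -> F v) /\ \dim (span s)%VS = d) /\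
  (forall s : seq V, (forall v, v \in s -> F v) -> (\dim (span s)%VS <= d)%N).

Definition argmax_unit F (x : V) : set V :=
  [set y | [/\ F y, enorm y = 1 &
            forall u, F u -> enorm u = 1 -> dotp x u <= dotp x y]].

End Defs.

(* Main.v *)
Require Import Defs.
From HB Require Import structures.
From mathcomp Require Import all_boot all_order all_algebra.
From mathcomp Require Import all_classical all_reals all_analysis.
From mathcomp Require Import ring lra.
Import Order.TTheory GRing.Theory Num.Theory.
Import numFieldNormedType.Exports.
Local Open Scope classical_set_scope.
Local Open Scope ring_scope.
Set Implicit Arguments. Unset Strict Implicit.

Section L.
Variables (R : realType) (n : nat).
Notation V := 'rV[R]_n.
Implicit Types u v w x y f : V.

Lemma dotpC u v : dotp u v = dotp v u.
Proof. by apply: eq_bigr => i _; rewrite mulrC. Qed.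
Lemma dotpDl u v w : dotp (u + v) w = dotp u w + dotp v w.
Proof. by rewrite /dotp -big_split; apply: eq_bigr => i _; rewrite mxE mulrDl. Qed.
Lemma dotpZl (a : R) u w : dotp (a *: u) w = a * dotp u w.
Proof. by rewrite /dotp mulr_sumr; apply: eq_bigr => i _; rewrite mxE mulrA. Qed.
Lemma dotpNl u w : dotp (- u) w = - dotp u w.
Proof. by rewrite /dotp -sumrN; apply: eq_bigr => i _; rewrite mxE mulNr. Qed.
Lemma dotpBl u v w : dotp (u - v) w = dotp u w - dotp v w.
Proof. by rewrite dotpDl dotpNl. Qed.
Lemma dotpDr u v w : dotp w (u + v) = dotp w u + dotp w v.
Proof. by rewrite dotpC dotpDl !(dotpC w). Qed.
Lemma dotpZr (a : R) u w : dotp w (a *: u) = a * dotp w u.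
Proof. by rewrite dotpC dotpZl dotpC. Qed.
Lemma dotpBr u v w : dotp w (u - v) = dotp w u - dotp w v.
Proof. by rewrite dotpC dotpBl !(dotpC w). Qed.
Lemma dotpNr u w : dotp w (- u) = - dotp w u.
Proof. by rewrite dotpC dotpNl dotpC. Qed.
Lemma dotp0l w : dotp 0 w = 0.
Proof. by rewrite /dotp big1 // => i _; rewrite mxE mul0r. Qed.
Lemma dotp_ge0 u : 0 <= dotp u u.
Proof. by apply: sumr_ge0 => i _; rewrite -expr2 sqr_ge0. Qed.
Lemma dotp_eq0 u : dotp u u = 0 -> u = 0.
Proof.
move=> /eqP; rewrite psumr_eq0 => [/allP H|i _]; last by rewrite -expr2 sqr_ge0.
apply/matrixP => i j; rewrite mxE (ord1 i).
have := H j (mem_index_enum j); rewrite implyTb mulf_eq0 orbb => /eqP //.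
Qed.
Lemma enorm_ge0 u : 0 <= enorm u.
Proof. exact: sqrtr_ge0. Qed.
Lemma enorm_sq u : enorm u ^+ 2 = dotp u u.
Proof. by rewrite /enorm sqr_sqrtr // dotp_ge0. Qed.
Lemma enorm_eq0 u : enorm u = 0 -> u = 0.
Proof. by move=> h; apply: dotp_eq0; rewrite -enorm_sq h expr0n. Qed.
Lemma enormN u : enorm (- u) = enorm u.
Proof. by rewrite /enorm dotpNl dotpNr opprK. Qed.

Lemma CS u v : dotp u v <= enorm u * enorm v.
Proof.
have [a0|a0] := eqVneq (enorm u) 0.
  by rewrite a0 mul0r (enorm_eq0 a0) dotp0l.
have [b0|b0] := eqVneq (enorm v) 0.
  by rewrite b0 mulr0 (enorm_eq0 b0) dotpC dotp0l.
have ha : 0 < enorm u by rewrite lt_neqAle eq_sym a0 enorm_ge0.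
have hb : 0 < enorm v by rewrite lt_neqAle eq_sym b0 enorm_ge0.
have := dotp_ge0 (enorm v *: u - enorm u *: v).
rewrite !(dotpBl, dotpBr, dotpZl, dotpZr) -!enorm_sq (dotpC v u) => h.
have h2 : 0 < enorm u * enorm v by apply: mulr_gt0.
nra.
Qed.

Section Face.
Variables (K F : set V).
Hypotheses (Kcv : convex.convex_set K) (Kc : is_cone K) (hF : is_face K F).

Lemma K0 z : K z -> K 0.
Proof. by move=> hz; have := @Kc z 0 hz (lexx _); rewrite scale0r. Qed.

Lemma KD a b : K a -> K b -> K (a + b).
Proof.
move=> ha hb; have h1 : (2^-1 : R) <= 1 by rewrite invf_le1 ?ler1n ?ltr0n.
have h0 : (0 : R) <= 2^-1 by rewrite invr_ge0 ler0n.
have := Kcv (Itv01 h0 h1) (mem_set ha) (mem_set hb).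
move=> /set_mem hk; have h2 : (0:R) <= 2 by rewrite ler0n.
have := Kc hk h2.
rewrite /conv /=.
have -> : unstable.onem (2^-1 : R) = 2^-1.
  by rewrite /unstable.onem /= {1}(splitr 1) mul1r addrK.
by rewrite scalerDr !scalerA mulfV ?pnatr_eq0 // !scale1r.
Qed.

Lemma FK z : F z -> K z.
Proof. by case: hF => _ _ s _; apply: s. Qed.

Lemma Fmid (a : R) u v : K u -> K v -> 0 < a -> a < 1 -> F (a *: u + (1 - a) *: v) -> F u /\ F v.
Proof. by case: hF => _ _ _; apply. Qed.

Lemma F0 z : F z -> F 0.
Proof.
move=> hz; have Kz := FK hz; have K0' := K0 Kz.
have K2 : K (2 *: z) by apply: Kc; rewrite ?ler0n //; apply: FK.
have := @Fmid (2^-1) 0 (2 *: z) K0' K2.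
rewrite invr_gt0 ltr0n invf_lt1 ?ltr0n ?ltr1n // => /(_ isT isT).
rewrite scaler0 add0r scalerA.
have -> : (1 - 2^-1 : R) = 2^-1 by rewrite {1}(splitr 1) mul1r addrK.
by rewrite mulVf ?pnatr_eq0 // scale1r => /(_ hz) [].
Qed.

Lemma FZ z (t : R) : F z -> 0 <= t -> F (t *: z).
Proof.
move=> hz t0; have F0' := F0 hz.
have [t1|t1] := lerP t 1.
  case: hF => _ cv _ _; have := cv _ _ _ hz F0' t0 t1.
  by rewrite scaler0 addr0.
have tp : 0 < t by apply: lt_trans t1.
have Kt : K (t *: z) by apply: Kc; [apply: FK|apply: ltW].
have := @Fmid (t^-1) (t *: z) 0 Kt (FK F0').
rewrite invr_gt0 tp invf_lt1 // => /(_ isT t1).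
by rewrite scaler0 addr0 scalerA mulVf ?gt_eqF // scale1r => /(_ hz) [].
Qed.

Lemma FD a b : F a -> F b -> F (a + b).
Proof.
move=> ha hb; case: hF => _ cv _ _.
have := cv _ _ (2^-1) ha hb; rewrite invr_ge0 ler0n => /(_ isT).
have h1 : (2^-1 : R) <= 1 by rewrite invf_le1 ?ler1n ?ltr0n.
move=> /(_ h1) hm; have h2 : (0:R) <= 2 by rewrite ler0n.
have := FZ hm h2.
rewrite scalerDr !scalerA mulfV ?pnatr_eq0 // scale1r.
have -> : (1 - 2^-1 : R) = 2^-1 by rewrite {1}(splitr 1) mul1r addrK.
by rewrite mulfV ?pnatr_eq0 // scale1r.
Qed.

Lemma enormZ (c : R) u : enorm (c *: u) = `|c| * enorm u.
Proof.
by rewrite /enorm dotpZl dotpZr mulrA -expr2 sqrtrM ?sqr_ge0 // sqrtr_sqr.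
Qed.

Lemma dotp_y1 y : enorm y = 1 -> dotp y y = 1.
Proof. by move=> h; rewrite -enorm_sq h expr1n. Qed.

Lemma normalize u : enorm u != 0 -> enorm ((enorm u)^-1 *: u) = 1.
Proof.
move=> nz; rewrite enormZ ger0_norm ?invr_ge0 ?enorm_ge0 // mulVf //.
Qed.

Lemma le_norm x y u : argmax_unit F x y -> F u -> dotp x u <= dotp x y * enorm u.
Proof.
case=> Fy ey hmax Fu.
have [z|nz] := eqVneq (enorm u) 0.
  by rewrite z mulr0 (enorm_eq0 z) dotpC dotp0l.
have cp : 0 < enorm u by rewrite lt_neqAle eq_sym nz enorm_ge0.
have ic : 0 <= (enorm u)^-1 by rewrite invr_ge0 enorm_ge0.
have := hmax _ (FZ Fu ic) (normalize nz).
rewrite dotpZr => h.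
have -> : dotp x u = enorm u * ((enorm u)^-1 * dotp x u) by rewrite mulrA mulfV // mul1r.
by rewrite mulrC ler_pM2r.
Qed.

Lemma polar x y f : argmax_unit F x y -> F f -> dotp x f <= dotp x y * dotp y f.
Proof.
move=> hy Ff; have [Fy ey _] := hy.
have y1 := dotp_y1 ey.
set m := dotp x y; set a := dotp y f; set b := dotp f f; set xf := dotp x f.
have keyN (s : R) : enorm (y + s *: f) ^+ 2 = 1 + 2 * s * a + s ^+ 2 * b.
  rewrite enorm_sq !(dotpDl, dotpDr, dotpZl, dotpZr) y1 (dotpC f y) -/a -/b.
  by rewrite expr2; ring.
have key1 (s : R) : 0 <= s -> m + s * xf <= m * enorm (y + s *: f).
  move=> s0; have := le_norm hy (FD Fy (FZ Ff s0)).
  by rewrite dotpDr dotpZr.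
have b0 : 0 <= b by apply: dotp_ge0.
have [m0|m0] := lerP m 0.
  have k1 := key1 1 ler01.
  have cs := CS (y + 1 *: f) y.
  rewrite ey mulr1 dotpDl dotpZl y1 mul1r -/a in cs.
  rewrite (dotpC f y) -/a in cs.
  have : m * enorm (y + 1 *: f) <= m * (1 + a) by nra.
  rewrite mul1r in k1; lra.
rewrite leNgt; apply/negP => hlt.
set d := xf - m * a.
have dp : 0 < d by rewrite subr_gt0.
set s := d / (m * b + 1).
have mb : 0 < m * b + 1 by have := mulr_ge0 (ltW m0) b0; lra.
have sp : 0 < s by rewrite divr_gt0.
have k1 := key1 s (ltW sp); have k2 := keyN s.
set N := enorm (y + s *: f) in k1 k2.
have N0 : 0 <= N by apply: enorm_ge0.
have amgm : N <= (N ^+ 2 + 1) / 2.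
  have := sqr_ge0 (N - 1); rewrite sqrrB; lra.
have : m * N <= m * ((N ^+ 2 + 1) / 2) by rewrite ler_pM2l.
rewrite k2 => h.
have hs : s * (m * b + 1) = d by rewrite /s mulfVK // gt_eqF.
have : s * d <= m * s ^+ 2 * b / 2.
  have : m + s * xf <= m * ((1 + 2 * s * a + s ^+ 2 * b + 1) / 2) by lra.
  rewrite /d; lra.
have : m * s * b < d by have := mulr_gt0 sp (ltr01 : (0:R) < 1); lra.
move=> h1 h2.
have : s * (m * s * b) < s * d by rewrite ltr_pM2l.
have := mulr_gt0 sp dp; rewrite expr2 in h2; lra.
Qed.

Lemma dist_low x y t f : argmax_unit F x y -> F f ->
  enorm (x - dotp x y *: y) <= enorm (x + t *: y - f).
Proof.
move=> hy Ff; have [Fy ey _] := hy.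
have y1 := dotp_y1 ey.
have pf := polar hy Ff.
set m := dotp x y in pf *.
set w := x - m *: y; set z := x + t *: y - f.
have cs := CS z w.
have hw : dotp w w = dotp x x - m ^+ 2.
  rewrite /w !(dotpBl, dotpBr, dotpZl, dotpZr) y1 (dotpC y x) -/m; ring.
have hz : dotp x x - m ^+ 2 <= dotp z w.
  rewrite /z /w !(dotpBl, dotpDl, dotpBr, dotpZl, dotpZr) y1 (dotpC y x) -/m.
  rewrite (dotpC f x) (dotpC f y); lra.
rewrite -hw -enorm_sq in hz.
have W0 := enorm_ge0 w; have Z0 := enorm_ge0 z.
have [->|wp] := eqVneq (enorm w) 0; first by [].
have wpos : 0 < enorm w by rewrite lt_neqAle eq_sym wp.
have : enorm w ^+ 2 <= enorm z * enorm w by lra.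
by rewrite expr2 ler_pM2r.
Qed.
End Face.

Lemma dist_le x (A : set V) a : A a -> dist x A <= enorm (x - a).
Proof.
move=> Aa; apply: ge_inf; last by exists a.
by exists 0 => _ [b _ <-]; apply: enorm_ge0.
Qed.

Lemma dist_ge x (A : set V) c : A !=set0 -> (forall a, A a -> c <= enorm (x - a)) -> c <= dist x A.
Proof.
move=> [a Aa] h; apply: lb_le_inf; first by exists (enorm (x - a)), a.
by move=> _ [b Ab <-]; apply: h.
Qed.

Lemma two_units (F : set V) :
  (forall z (t : R), F z -> 0 <= t -> F (t *: z)) ->
  (exists d : nat, has_dim F d /\ (1 < d)%N) ->
  exists u1 u2, [/\ F u1, F u2, enorm u1 = 1, enorm u2 = 1 & u1 != u2].
Proof.
move=> hFZ [d [[[s [sF sd]] _] d1]].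
apply: contrapT => H.
have uniq1 u1 u2 : F u1 -> F u2 -> enorm u1 = 1 -> enorm u2 = 1 -> u1 = u2.
  move=> h1 h2 e1 e2; apply/eqP; apply: contrapT => ne; apply: H.
  by exists u1, u2; split => //; apply/negP.
have [[u0 [Fu0 e0]]|nu] := pselect (exists u, F u /\ enorm u = 1).
- have sub : {subset s <= <[u0]>%VS}.
    move=> v vs; have Fv := sF v vs.
    have [/enorm_eq0 ->|nz] := eqVneq (enorm v) 0; first by rewrite mem0v.
    have ic : 0 <= (enorm v)^-1 by rewrite invr_ge0 enorm_ge0.
    have := uniq1 _ _ (hFZ _ _ Fv ic) Fu0 (normalize nz) e0.
    move=> eq; have -> : v = enorm v *: ((enorm v)^-1 *: v).
      by rewrite scalerA mulfV // scale1r.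
    by rewrite eq memvZ // memv_line.
  have := dimvS (introT span_subvP sub); rewrite dim_vline sd.
  by case: (u0 != 0) => /= h; move: d1; rewrite ltnNge (leq_trans h).
- have sub : {subset s <= <[0 : V]>%VS}.
    move=> v vs; have Fv := sF v vs.
    have [/enorm_eq0 ->|nz] := eqVneq (enorm v) 0; first by rewrite mem0v.
    have ic : 0 <= (enorm v)^-1 by rewrite invr_ge0 enorm_ge0.
    by exfalso; apply: nu; exists ((enorm v)^-1 *: v); split; [apply: hFZ|apply: normalize].
  have := dimvS (introT span_subvP sub); rewrite dim_vline sd eqxx /=.
  by rewrite leqn0 => /eqP d0; move: d1; rewrite d0.
Qed.
End L.

Unset Implicit Arguments. Set Strict Implicit.

Theorem proposition4p4 (R : realType) (n : nat) (K : set 'rV[R]_n) :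
  closed K -> convex_set K -> is_cone K -> pointed K ->
  forall F : set 'rV[R]_n, is_face K F ->
  (exists d : nat, has_dim F d /\ (1 < d)%N) ->
  exists beta : R, 0 < beta /\
    forall x y : 'rV[R]_n, linspan F x -> argmax_unit F x y ->
    forall t : R, 0 <= t ->
      dist (x + t *: y) K <= dist x K /\
      dist x F <= beta * dist (x + t *: y) F.
Proof.
move=> Kcl Kcv Kc Kp F hF hd.
have hFZ : forall z (t : R), F z -> 0 <= t -> F (t *: z).
  by move=> z t; apply: (FZ Kc hF).
have [u1 [u2 [Fu1 Fu2 e1 e2 ne]]] := two_units hFZ hd.
have y1 := dotp_y1 e1; have y2 := dotp_y1 e2.
set D := dotp (u1 - u2) (u1 - u2).
have D0 : 0 < D.
  rewrite lt_neqAle dotp_ge0 andbT eq_sym; apply/eqP => /dotp_eq0 /eqP.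
  by rewrite subr_eq0 (negbTE ne).
have hN : dotp (u1 + u2) (u1 + u2) = 4 - D.
  rewrite /D !(dotpDl, dotpDr, dotpNl, dotpNr) opprK y1 y2 (dotpC u2 u1).
  ring.
have D4 : D <= 4 by have := dotp_ge0 (u1 + u2); rewrite hN; lra.
have hB : 1 <= 4 / D by rewrite ler_pdivlMr // mul1r.
have BD : 4 / D * D = 4 by rewrite mulfVK // gt_eqF.
exists (4 / D); split; first by rewrite divr_gt0.
move=> x y _ hy t t0; have [Fy ey hmax] := hy.
split.
  apply: dist_ge; first by exists y; apply: (FK hF).
  move=> k Kk.
  have Kk' : K (k + t *: y) by apply: (KD Kcv Kc) => //; apply: Kc => //; apply: (FK hF).
  have := dist_le (x + t *: y) Kk'.
  suff -> : x + t *: y - (k + t *: y) = x - k by [].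
  by rewrite opprD addrACA subrr addr0.
set m := dotp x y.
set W := enorm (x - m *: y).
have hZ : W <= dist (x + t *: y) F.
  apply: dist_ge; first by exists y.
  by move=> f Ff; apply: (dist_low Kc hF).
have W0 : 0 <= W by apply: enorm_ge0.
have BW : 4 / D * W <= 4 / D * dist (x + t *: y) F.
  by rewrite ler_wpM2l // ltW // divr_gt0.
apply: le_trans BW.
have [mp|mn] := ltrP 0 m.
  apply: (le_trans (dist_le x (hFZ _ _ Fy (ltW mp)))).
  by rewrite -/W; nra.
have F0' : F 0 by apply: (F0 Kc hF Fy).
apply: (le_trans (dist_le x F0')); rewrite subr0.
have hu1 : dotp x u1 <= m := hmax _ Fu1 e1.
have hu2 : dotp x u2 <= m := hmax _ Fu2 e2.
have cs := CS (- x) (u1 + u2).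
rewrite enormN dotpNl dotpDr in cs.
set X := enorm x in cs *.
set N := enorm (u1 + u2) in cs.
have X0 : 0 <= X by apply: enorm_ge0.
have N0 : 0 <= N by apply: enorm_ge0.
have N2 : N ^+ 2 = 4 - D by rewrite enorm_sq.
have hW : W ^+ 2 = X ^+ 2 - m ^+ 2.
  rewrite /W /X !enorm_sq !(dotpBl, dotpBr, dotpZl, dotpZr) (dotp_y1 ey) (dotpC y x) -/m; ring.
have q0 : 0 <= - 2 * m by lra.
have q1 : - 2 * m <= X * N by lra.
have q2 : (- 2 * m) * (- 2 * m) <= (X * N) * (X * N) by apply: ler_pM.
have h4 : D * X ^+ 2 <= 4 * W ^+ 2.
  rewrite hW; have : 4 * m ^+ 2 <= X ^+ 2 * (4 - D).
    by rewrite -N2; move: q2; rewrite !expr2; lra.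
  lra.
set B := 4 / D in hB BD *.
have h5 : X ^+ 2 <= (B * W) ^+ 2.
  have : B * B * (D * X ^+ 2) <= B * B * (4 * W ^+ 2).
    by apply: ler_wpM2l => //; apply: mulr_ge0; lra.
  have -> : B * B * (D * X ^+ 2) = 4 * B * X ^+ 2.
    by rewrite -BD; ring.
  have : X ^+ 2 <= B * X ^+ 2 by rewrite ler_peMl ?sqr_ge0.
  rewrite exprMn; lra.
have BW0 : 0 <= B * W by apply: mulr_ge0 => //; lra.
by rewrite -(ler_pXn2r (_ : (0 < 2)%N)) ?nnegrE.
Qed.
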